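(* Let $x>1/2$ and define $\rho_x(G)=\max(\rho(G),x)$ for graphs $G$. Then for all edge-neighboring graphs $G,G'$, $|\rho_x(G)-\rho_x(G')|\le\frac{1}{2x-1}$.
   Context: Graphs are simple undirected with vertex set $V$. For nonempty $S\subseteq V$, $\rho(S)=|E(S)|/|S|$ where $E(S)$ is the set of edges with both endpoints in $S$, and $\rho(G)=\max_{\emptyset\ne S\subseteq V}\rho(S)$. Two graphs are edge-neighboring if they have the same vertex set and their edge sets differ in exactly one edge. *)

(* Defs.v *)
From mathcomp Require Import all_boot all_order all_algebra.
Set Implicit Arguments. Unset Strict Implicit. Unset Printing Implicit Defensive.
Import Order.TTheory GRing.Theory Num.Theory.
Local Open Scope ring_scope.

(* A simple undirected graph on the finite vertex type V is given by its edge
   set E : {set {set V}}, every edge being a 2-element subset of V. *)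
Definition simple_graph (V : finType) (E : {set {set V}}) : bool :=
  [forall e in E, #|e| == 2%N].

Definition induced_edges (V : finType) (E : {set {set V}}) (S : {set V})
  : {set {set V}} := [set e in E | e \subset S].

Definition density (R : realFieldType) (V : finType) (E : {set {set V}})
  (S : {set V}) : R := (#|induced_edges E S|)%:R / (#|S|)%:R.

(* rho(G) = max over nonempty S of rho(S) (0 if V is empty). *)
Definition max_density (R : realFieldType) (V : finType) (E : {set {set V}}) : R :=
  \big[Num.max/0]_(S : {set V} | S != set0) density R E S.

Definition rho_x (R : realFieldType) (x : R) (V : finType) (E : {set {set V}}) : R :=
  Num.max (max_density R E) x.

Definition edge_neighboring (V : finType) (E E' : {set {set V}}) : bool :=
  #|(E :\: E') :|: (E' :\: E)| == 1%N.

(* Main.v *)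
Require Import Defs.
From mathcomp Require Import all_boot all_order all_algebra.
From mathcomp Require Import ring lra zify.
Import Order.TTheory GRing.Theory Num.Theory.
Local Open Scope ring_scope.

Lemma edge_count (V : finType) (E : {set {set V}}) (S : {set V}) :
  simple_graph E -> (2 * #|induced_edges E S| <= #|S| * (#|S|).-1)%N.
Proof.
move=> /forallP sE.
have H : (#|induced_edges E S| <= 'C(#|S|, 2))%N.
  rewrite -cards_draws; apply: subset_leq_card; apply/subsetP => e.
  rewrite !inE => /andP[eE eS]; rewrite eS /=.
  by have := sE e; rewrite eE.
rewrite bin2 in H.
have := odd_double_half (#|S| * (#|S|).-1).
rewrite -muln2 in H *; lia.
Qed.

Lemma step (R : realFieldType) (x : R) (V : finType) (E E' : {set {set V}}) :
  1 / 2 < x -> simple_graph E' -> E \subset E' -> #|E' :\: E| = 1%N ->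
  0 <= rho_x x E' - rho_x x E <= 1 / (2 * x - 1).
Proof.
move=> hx sE' sub c1.
have x0 : 0 < x by lra.
have c0 : 0 < 1 / (2 * x - 1) by apply: divr_gt0; lra.
have cnt S : (#|induced_edges E S| <= #|induced_edges E' S|)%N /\
  (#|induced_edges E' S| <= (#|induced_edges E S|).+1)%N.
  split.
    apply: subset_leq_card; apply/subsetP => e; rewrite !inE => /andP[eE ->].
    by rewrite (subsetP sub e eE).
  apply: (leq_trans (subset_leq_card (_ : _ \subset induced_edges E S :|: (E' :\: E)))).
    apply/subsetP => e; rewrite !inE => /andP[eE' ->]; rewrite eE' andbT.
    by case: (e \in E).
  by rewrite (leq_trans (leq_card_setU _ _)) // c1 addn1.
have dle S : density R E S <= density R E' S.
  rewrite /density; case: (#|S| =P 0%N) => [->|/eqP k0]; first by rewrite !invr0 !mulr0.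
  rewrite ler_pM2r ?invr_gt0 ?ltr0n ?lt0n // ler_nat; exact: (cnt S).1.
have rE : 0 <= rho_x x E by rewrite le_max; apply/orP; right; lra.
have rE' : 0 <= rho_x x E' by rewrite le_max; apply/orP; right; lra.
have ub : forall S, S != set0 -> density R E' S <= rho_x x E + 1 / (2 * x - 1).
  move=> S S0.
  have k0 : (0 < #|S|)%N by rewrite lt0n cards_eq0.
  have kp : (0 : R) < (#|S|)%:R by rewrite ltr0n.
  have := @edge_count V E' S sE'.
  case: (cnt S) => c1' c2'.
  set m := #|induced_edges E S|; set m' := #|induced_edges E' S|; set k := #|S|.
  move=> ec.
  have dm : density R E S <= rho_x x E.
    rewrite /rho_x le_max; apply/orP; left.
    rewrite /max_density (bigD1 S) //= le_max; by rewrite lexx.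
  rewrite /density -/m -/m' -/k in dm *.
  have [mm|mm] := leqP m' m.
    apply: le_trans (_ : m%:R / k%:R <= _); last lra.
    by rewrite ler_pM2r ?invr_gt0 // ler_nat.
  have em : m' = m.+1 by lia.
  have xle : x <= rho_x x E by rewrite le_max lexx orbT.
  have [lx|lx] := lerP (m'%:R / k%:R) x; first lra.
  have kk : (2 * m' <= k * k.-1)%N := ec.
  have kR : 2 * (m'%:R : R) <= k%:R * (k%:R - 1).
    have -> : (k%:R : R) - 1 = (k.-1)%:R by rewrite -[k in LHS](prednK k0) -addn1 natrD addrK.
    by move: kk; rewrite -(ler_nat R) !natrM.
  have xk : x * k%:R < m'%:R by rewrite -ltr_pdivlMr.
  have k2 : 2 * x - 1 <= k%:R by nra.
  rewrite em -addn1 natrD mulrDl.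
  have : 1 / k%:R <= 1 / (2 * x - 1).
    rewrite !div1r ler_pV2 // inE ?unitfE /=; try (apply/andP; split); try lra.
    all: try (apply/eqP; lra).
  lra.
have mdE' : max_density R E' <= rho_x x E + 1 / (2 * x - 1).
  rewrite /max_density; apply: (big_ind (fun v => v <= _)); first lra.
    by move=> a b ha hb; rewrite ge_max ha hb.
  exact: ub.
have mdE : max_density R E <= rho_x x E'.
  rewrite /max_density; apply: (big_ind (fun v => v <= _)) => //.
    by move=> a b ha hb; rewrite ge_max ha hb.
  move=> S S0; apply: le_trans (dle S) _.
  rewrite /rho_x le_max; apply/orP; left.
  rewrite /max_density (bigD1 S) //= le_max; by rewrite lexx.
have h1 : rho_x x E' <= rho_x x E + 1 / (2 * x - 1).
  rewrite /rho_x ge_max mdE' /=.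
  have : x <= rho_x x E by rewrite le_max lexx orbT.
  rewrite /rho_x; lra.
have h2 : rho_x x E <= rho_x x E'.
  rewrite {1}/rho_x ge_max mdE /= /rho_x le_max lexx orbT //.
apply/andP; split; lra.
Qed.

Theorem mainTheorem13 (R : realFieldType) (x : R) (V : finType)
  (E E' : {set {set V}}) :
  1 / 2 < x -> simple_graph E -> simple_graph E' -> edge_neighboring E E' ->
  `| rho_x x E - rho_x x E' | <= 1 / (2 * x - 1).
Proof.
move=> hx sE sE' /eqP nb.
have hI : (E :\: E') :&: (E' :\: E) = set0.
  apply/setP => e; rewrite !inE; by case: (e \in E); case: (e \in E').
rewrite cardsU hI cards0 subn0 in nb.
have [h0|h0] : #|E :\: E'| = 0%N \/ #|E' :\: E| = 0%N by lia.
- have sub : E \subset E' by rewrite -setD_eq0 -cards_eq0 h0.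
  rewrite h0 add0n in nb.
  have /andP[a b] := @step R x V E E' hx sE' sub nb.
  rewrite distrC ger0_norm //.
- have sub : E' \subset E by rewrite -setD_eq0 -cards_eq0 h0.
  rewrite h0 addn0 in nb.
  have /andP[a b] := @step R x V E' E hx sE sub nb.
  by rewrite ger0_norm.
Qed.
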